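(* For every $\alpha\in(0,1)$, every set of $m$ statistical queries $\mathcal{Q}$ over a universe $U$ of size $N$ with query matrix $Q\in[0,1]^{m\times N}$, and every $n\in\mathbb{N}$, there exists \[ s=\frac5\alpha\cdot\mathrm{hdisc}^*(Q,n) \] such that for every dataset $x\in U^n$ whose elements are all distinct, there exists a dataset $y\in U^*$ of size at most $s$ with $\|\mathcal{Q}(x)-\mathcal{Q}(y)\|_\infty\le\alpha$.
   Context: A statistical query is $q:U\to\mathbb{R}$ with $q(x)=\frac1{|x|}\sum_{i}q(x_i)$ for a dataset $x$ (a finite sequence of elements of $U$); $\mathcal{Q}(x)=(q_1(x),\ldots,q_m(x))$; the query matrix has $i$-th row $(q_i(u))_{u\in U}$. $U^*$ denotes finite sequences over $U$. For an $m\times N$ matrix $Q$, $Q^*$ is the $(m+1)\times N$ matrix obtained by appending the all-ones row, $Q^*_S$ is its submatrix of columns in $S$, and $\mathrm{hdisc}^*(Q,w)=\max_{S\subseteq[N],|S|\le w}\min_{z\in\{\pm1\}^S}\|Q^*_Sz\|_\infty$. *)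

(* Defs.v *)
From mathcomp Require Import all_boot all_order all_algebra.
Set Implicit Arguments. Unset Strict Implicit. Unset Printing Implicit Defensive.
Import Order.TTheory GRing.Theory Num.Theory.
Local Open Scope ring_scope.

(* Universe: a finite type U (so N = #|U|); columns of the query matrix are
   indexed by U. A family of m statistical queries is q : 'I_m -> U -> R,
   i.e. the query matrix Q has entries Q i u = q i u. *)

(* Answer of statistical query q on dataset x : (1/|x|) sum_i q(x_i).
   (For the empty dataset this is 0, by MathComp's convention 0^-1 = 0.) *)
Definition sq_answer (R : realFieldType) (U : finType) (q : U -> R) (x : seq U) : R :=
  (size x)%:R^-1 * \sum_(u <- x) q u.

(* Rows of Q^*: the m rows of Q plus the all-ones row (indexed by None). *)
Definition qstar_row (R : realFieldType) (U : finType) (m : nat)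
  (q : 'I_m -> U -> R) (r : option 'I_m) (u : U) : R :=
  match r with Some i => q i u | None => 1 end.

(* || Q^*_S z ||_oo for a sign vector z in {+-1}^S, encoded by a boolean
   function on U (only its restriction to S matters): z_u = (-1)^(b u). *)
Definition qstar_norm (R : realFieldType) (U : finType) (m : nat)
  (q : 'I_m -> U -> R) (S : {set U}) (b : {ffun U -> bool}) : R :=
  \big[Num.max/0]_(r : option 'I_m)
     `| \sum_(u in S) qstar_row q r u * (-1) ^+ (b u) |.

(* min over sign vectors; the set of sign vectors is nonempty, so we take
   the minimum as a bigop with top element given by one sign vector. *)
Definition disc_star (R : realFieldType) (U : finType) (m : nat)
  (q : 'I_m -> U -> R) (S : {set U}) : R :=
  \big[Num.min/qstar_norm q S [ffun=> false]]_(b : {ffun U -> bool})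
     qstar_norm q S b.

Definition hdisc_star (R : realFieldType) (U : finType) (m : nat)
  (q : 'I_m -> U -> R) (w : nat) : R :=
  \big[Num.max/disc_star q set0]_(S : {set U} | (#|S| <= w)%N) disc_star q S.

(* Main.v *)
Require Import Defs.
From mathcomp Require Import all_boot all_order all_algebra.
From mathcomp Require Import ring lra.
Import Order.TTheory GRing.Theory Num.Theory.
Local Open Scope ring_scope.

Lemma err_lem (R : realFieldType) (A B K K' h : R) : 0 < K -> 0 <= K' ->
  0 <= A + B <= K + K' -> `|A - B| <= h -> 0 <= K - K' <= h ->
  `|A / K - (A + B) / (K + K')| <= h / K.
Proof.
move=> K0 K'0 /andP[s0 s1] e /andP[d0 d1].
have k0 : 0 < K + K' by lra.
have -> : A / K - (A + B) / (K + K') = (A * K' - B * K) / (K * (K + K')).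
  by field; apply/andP; split; rewrite gt_eqF.
rewrite normf_div (gtr0_norm (mulr_gt0 K0 k0)) ler_pdivrMr ?mulr_gt0 //.
have -> : h / K * (K * (K + K')) = h * (K + K') by field; rewrite gt_eqF.
move: e; rewrite !ler_norml => /andP[e1 e2]; apply/andP.
have P1 := mulr_ge0 s0 d0.
have P2 : 0 <= (K + K' - (A + B)) * (K - K') by apply: mulr_ge0; lra.
have P3 : 0 <= (K + K') * (h - (K - K')) by apply: mulr_ge0; lra.
have P4 : 0 <= (K + K') * (h - (A - B)) by apply: mulr_ge0; lra.
have P5 : 0 <= (K + K') * (h + (A - B)) by apply: mulr_ge0; lra.
split; nra.
Qed.

Lemma comb (R : realFieldType) (a h K K' E1 E2 : R) : 0 < a < 1 -> 0 <= h ->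
  0 < K -> 0 <= K' -> 0 <= K - K' <= h -> 5 * h < a * (K + K') ->
  E1 <= h / K -> E2 <= (if 5 * h < a * K then a - 3 * h / K else 0) ->
  E1 + E2 <= a - 3 * h / (K + K').
Proof.
move=> /andP[a0 a1] h0 K0 K'0 /andP[d0 d1] big e1.
have k0 : 0 < K + K' by lra.
have hk : 3 * h <= K + K' by nra.
case: ifP => _ e2.
- have : 3 * h / (K + K') <= 2 * h / K.
    rewrite ler_pdivrMr // mulrAC ler_pdivlMr //.
    have := mulr_ge0 h0 (_ : 0 <= 2 * (K + K') - 3 * K); nra.
  lra.
- have : h / K <= 2 * h / (K + K').
    rewrite ler_pdivrMr // mulrAC ler_pdivlMr //.
    have := mulr_ge0 h0 (_ : 0 <= 2 * K - (K + K')); nra.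
  have : 5 * h / (K + K') < a by rewrite ltr_pdivrMr //; lra.
  have -> : 5 * h / (K + K') = 2 * h / (K + K') + 3 * h / (K + K') by field; rewrite gt_eqF.
  lra.
Qed.

Lemma sum_split (R : realFieldType) (U : finType) (S : {set U}) (b : {ffun U -> bool}) (c : bool) (f : U -> R) :
  \sum_(u in S) f u = \sum_(u in [set u in S | b u == c]) f u + \sum_(u in [set u in S | b u != c]) f u.
Proof.
rewrite (bigID (fun u => b u == c)) /=; congr (_ + _); apply: eq_bigl => u; by rewrite !inE.
Qed.

Lemma sign_split (R : realFieldType) (U : finType) (S : {set U}) (b : {ffun U -> bool}) (c : bool) (f : U -> R) :
  \sum_(u in S) f u * (-1) ^+ (b u) = (-1) ^+ c *
   (\sum_(u in [set u in S | b u == c]) f u - \sum_(u in [set u in S | b u != c]) f u).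
Proof.
rewrite (@sum_split _ _ S b c) mulrBr; congr (_ + _).
  rewrite mulr_sumr; apply: eq_bigr => u; rewrite inE => /andP[_ /eqP->]; by rewrite mulrC.
rewrite -mulrN -sumrN mulr_sumr; apply: eq_bigr => u; rewrite inE => /andP[_].
by case: (b u); case: c => //= _; rewrite ?expr1 ?expr0 ?mulrN1 ?mulN1r ?mulr1 ?mul1r ?opprK.
Qed.

Lemma card_R (R : realFieldType) (U : finType) (S : {set U}) :
  \sum_(u in S) (1 : R) = #|S|%:R.
Proof. by rewrite sumr_const. Qed.

Definition avg (R : realFieldType) (U : finType) (f : U -> R) (S : {set U}) : R :=
  #|S|%:R^-1 * \sum_(u in S) f u.
Arguments avg {R U}.

Lemma main (R : realFieldType) (U : finType) (m : nat) (q : 'I_m -> U -> R) (a h : R) :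
 0 < a < 1 -> 0 <= h -> (forall i u, 0 <= q i u <= 1) ->
 forall k (S : {set U}), (#|S| <= k)%N -> (0 < #|S|)%N ->
 (forall S' : {set U}, S' \subset S -> exists b : {ffun U -> bool}, forall r,
     `|\sum_(u in S') qstar_row q r u * (-1) ^+ (b u)| <= h) ->
 exists T : {set U}, [/\ T \subset S, (0 < #|T|)%N, a * #|T|%:R <= 5 * h &
   forall i, `|avg (q i) S - avg (q i) T| <=
       (if 5 * h < a * #|S|%:R then a - 3 * h / #|S|%:R else 0)].
Proof.
move=> /andP[a0 a1] h0 q01; elim=> [|k IH] S.
  by rewrite leqn0 => /eqP ->.
move=> Sk S0 Hd.
case: ifP => big; last first.
  exists S; split => //; first by rewrite leNgt big.
  by move=> i; rewrite subrr normr0.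
have [b Hb] := Hd S (subxx _).
have [c Hc] : exists c, (#|[set u in S | b u != c]| <= #|[set u in S | b u == c]|)%N.
  case: (leqP #|[set u in S | b u != true]| #|[set u in S | b u == true]|) => H.
    by exists true.
  exists false.
  have -> : [set u in S | b u != false] = [set u in S | b u == true].
    by apply/setP => u; rewrite !inE; case: (b u).
  have -> : [set u in S | b u == false] = [set u in S | b u != true].
    by apply/setP => u; rewrite !inE; case: (b u).
  exact: ltnW.
set T := [set u in S | b u == c]; set T' := [set u in S | b u != c].
set K : R := #|T|%:R; set K' : R := #|T'|%:R.
have kS : #|S|%:R = K + K' :> R by rewrite /K /K' -!card_R (@sum_split _ _ S b c).
have KK' : K' <= K by rewrite ler_nat.
have K'0 : 0 <= K' by rewrite ler0n.
have dK : K - K' <= h.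
  have := Hb None; rewrite /qstar_row (@sign_split _ _ S b c) normrM normrX normrN1 expr1n mul1r.
  by rewrite !card_R => /(le_trans (ler_norm _)).
rewrite kS in big *.
have K0 : 0 < K by nra.
have TS : (#|T| < #|S|)%N.
  rewrite -(ltr_nat R) kS -/K; nra.
have T0 : (0 < #|T|)%N by rewrite -(ltr0n R).
have TsS : T \subset S by apply/subsetP => u; rewrite inE => /andP[].
have HdT : forall S' : {set U}, S' \subset T -> exists b : {ffun U -> bool}, forall r,
     `|\sum_(u in S') qstar_row q r u * (-1) ^+ (b u)| <= h.
  by move=> S' S'T; apply: Hd; apply: subset_trans S'T TsS.
have Tk : (#|T| <= k)%N by rewrite -ltnS (leq_trans TS Sk).
have [T2 [T2T T20 T2s T2e]] := IH T Tk T0 HdT.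
 exists T2; split => //.
    exact: subset_trans T2T TsS.
  move=> i.
  have -> : avg (q i) S - avg (q i) T2 = (avg (q i) S - avg (q i) T) + (avg (q i) T - avg (q i) T2) by rewrite addrA subrK.
  apply: le_trans (ler_normD _ _) _.
  apply: (@comb R a h K K') => //; first by apply/andP.
  + lra.
  + rewrite /avg (@sum_split _ _ S b c) kS -/T -/T' -/K distrC.
    have := Hb (Some i); rewrite /qstar_row (@sign_split _ _ S b c) normrM normrX normrN1 expr1n mul1r => He.
    rewrite [K^-1 * _]mulrC [(K + K')^-1 * _]mulrC.
    apply: err_lem => //; last by lra.
    rewrite -(@sum_split _ _ S b c) -kS -card_R.
    apply/andP; split; first by apply: sumr_ge0 => u _; have /andP[] := q01 i u.
    apply: ler_sum => u _; by have /andP[] := q01 i u.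
Qed.

Lemma le_bigmax_gen (R : realFieldType) (I : eqType) (r : seq I) (P : pred I) (F : I -> R) x0 i :
  i \in r -> P i -> F i <= \big[Num.max/x0]_(j <- r | P j) F j.
Proof.
elim: r => [//|j r IHr]; rewrite inE big_cons => /orP[/eqP <- -> | ir Pi].
  by rewrite le_max lexx.
case: ifP => _; last exact: IHr.
by rewrite le_max IHr ?orbT.
Qed.

Lemma disc_attained (R : realFieldType) (U : finType) (m : nat) (q : 'I_m -> U -> R) (S : {set U}) :
  exists b, qstar_norm q S b = disc_star q S.
Proof.
rewrite /disc_star; apply: (big_ind (fun v => exists b, qstar_norm q S b = v)).
- by exists [ffun=> false].
- move=> x y [bx <-] [by' <-]; case: (leP (qstar_norm q S bx) (qstar_norm q S by')) => _.
  + by exists bx. + by exists by'.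
- by move=> b _; exists b.
Qed.

Lemma row_le (R : realFieldType) (U : finType) (m : nat) (q : 'I_m -> U -> R) (S : {set U}) (b : {ffun U -> bool}) r :
  `| \sum_(u in S) qstar_row q r u * (-1) ^+ (b u) | <= qstar_norm q S b.
Proof. by rewrite /qstar_norm; apply: (@le_bigmax_gen R _ _ xpredT (fun r => `| \sum_(u in S) qstar_row q r u * (-1) ^+ (b u) |)); rewrite ?mem_index_enum. Qed.

Arguments disc_attained {R U m}.
Arguments row_le {R U m}.

Theorem theorem6p8 (R : realFieldType) (alpha : R) (U : finType) (m : nat)
  (q : 'I_m -> U -> R) (n : nat) :
  0 < alpha < 1 ->
  (forall i u, 0 <= q i u <= 1) ->
  let s := 5 / alpha * hdisc_star q n in
  forall x : seq U, size x = n -> uniq x ->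
  exists y : seq U, (size y)%:R <= s /\
    forall i : 'I_m, `| sq_answer (q i) x - sq_answer (q i) y | <= alpha.
Proof.
move=> /andP[a0 a1] q01 s x sx ux.
set h := hdisc_star q n.
have hS : forall S : {set U}, (#|S| <= n)%N -> disc_star q S <= h.
  move=> S Sn; rewrite /h /hdisc_star.
  by apply: (@le_bigmax_gen R _ _ (fun S : {set U} => (#|S| <= n)%N) (disc_star q)); rewrite ?mem_index_enum.
have h0 : 0 <= h.
  apply: le_trans (hS set0 _); last by rewrite cards0.
  have [b <-] := disc_attained q set0.
  exact: le_trans (normr_ge0 _) (row_le q set0 b None).
set X := [set u in x].
have cX : #|X| = n by rewrite cardsE -sx; apply/card_uniqP.
have ansX : forall i, sq_answer (q i) x = avg (q i) X.
  move=> i; rewrite /sq_answer /avg cX sx big_uniq //; congr (_ * _).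
  by apply: eq_bigl => u; rewrite inE.
have Hd : forall S' : {set U}, S' \subset X -> exists b : {ffun U -> bool}, forall r,
     `|\sum_(u in S') qstar_row q r u * (-1) ^+ (b u)| <= h.
  move=> S' S'X; have [b Hb] := disc_attained q S'.
  exists b => r; apply: le_trans (row_le q S' b r) _; rewrite Hb; apply: hS.
  by rewrite -cX subset_leq_card.
have a5 : 0 < alpha by [].
case: (leP (alpha * n%:R) (5 * h)) => big.
  exists x; split; last by move=> i; rewrite subrr normr0 ltW.
  rewrite sx /s mulrAC ler_pdivlMr //; first by rewrite mulrC.
have X0 : (0 < #|X|)%N.
  rewrite cX -(ltr0n R) -(pmulr_rgt0 _ a0); lra.
have [T [TX T0 Ts Te]] := @main R U m q alpha h (introT andP (conj a0 a1)) h0 q01 #|X| X (leqnn _) X0 Hd.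
exists (enum T); split.
  rewrite -cardE /s mulrAC ler_pdivlMr // mulrC //.
move=> i; rewrite ansX.
have ansT : sq_answer (q i) (enum T) = avg (q i) T by rewrite /sq_answer /avg -cardE big_enum.
rewrite ansT; apply: le_trans (Te i) _; rewrite cX big lerBlDr lerDl.
by apply: divr_ge0; rewrite ?ler0n // mulr_ge0.
Qed.
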